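(* For all integers $m\ge1$ and $q\ge1$, the Jacobian determinant of the polynomial map $\mathbb R^m\to\mathbb R^m$, $\xi\mapsto\nabla_\xi A_{q+1}(\xi)-(q+1)^2A_q(\xi)\underline1$, is a nonzero polynomial in $\xi$; consequently this map is a local diffeomorphism outside the real algebraic hypersurface where this determinant vanishes.
   Context: $A_r(\xi_1,\dots,\xi_m)=\sum_{k\in\mathbb N^m,\ \sum_ik_i=r}\binom{r}{k_1,\dots,k_m}^2\prod_i\xi_i^{k_i}$ (multinomial coefficients); $\underline1=(1,\dots,1)\in\mathbb R^m$. *)

(* Defs.v *)
From HB Require Import structures.
From mathcomp Require Import all_boot all_order all_algebra.
Set Implicit Arguments. Unset Strict Implicit. Unset Printing Implicit Defensive.
Import Order.TTheory GRing.Theory Num.Theory.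
Local Open Scope ring_scope.

(* Multivariate polynomials in m variables over R, represented as formal sums
   (finite lists) of terms (coefficient, exponent vector). *)
Definition mpoly (R : nzRingType) (m : nat) := seq (R * {ffun 'I_m -> nat}).

Definition meval (R : comNzRingType) m (p : mpoly R m) (xi : 'rV[R]_m) : R :=
  \sum_(t <- p) t.1 * \prod_(i < m) xi 0 i ^+ t.2 i.

Definition mderiv (R : nzRingType) m (j : 'I_m) (p : mpoly R m) : mpoly R m :=
  [seq ((t.2 j)%:R * t.1, [ffun i => (t.2 i - (i == j))%N]) | t : R * {ffun 'I_m -> nat} <- p].

Definition madd (R : nzRingType) m (p p' : mpoly R m) : mpoly R m := p ++ p'.
Definition mscale (R : nzRingType) m (c : R) (p : mpoly R m) : mpoly R m :=
  [seq (c * t.1, t.2) | t : R * {ffun 'I_m -> nat} <- p].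

Definition multinom m (r : nat) (k : {ffun 'I_m -> nat}) : nat :=
  (r`! %/ \prod_(i < m) (k i)`!)%N.

Definition Apoly (R : nzRingType) (m r : nat) : mpoly R m :=
  [seq (((multinom r [ffun i => val (k i)]) ^ 2)%N%:R, [ffun i => val (k i)])
  | k : {ffun 'I_m -> 'I_r.+1} <- enum {ffun 'I_m -> 'I_r.+1}
  & (\sum_(i < m) val (k i) == r)%N].

Definition Fmap (R : nzRingType) (m q : nat) (i : 'I_m) : mpoly R m :=
  madd (mderiv i (Apoly R m q.+1)) (mscale (- (q.+1 ^ 2)%N%:R) (Apoly R m q)).

Definition jacF (R : comNzRingType) (m q : nat) (xi : 'rV[R]_m) : 'M[R]_m :=
  \matrix_(i < m, j < m) meval (mderiv j (Fmap R q i)) xi.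

(* Main.v *)
Require Import Defs.
From HB Require Import structures.
From Stdlib Require Import Lia.
From mathcomp Require Import all_boot all_order all_algebra.
Set Implicit Arguments. Unset Strict Implicit. Unset Printing Implicit Defensive.
Import Order.TTheory GRing.Theory Num.Theory.
Local Open Scope ring_scope.

Ltac nlia := intros; repeat match goal with H: is_true (leq _ _) |- _ => move/ssrnat.leP: H => H end;
  try (apply/ssrnat.leP); unfold addn, subn, muln, addn_rec, subn_rec, muln_rec in *; lia.

Ltac nnia := intros; repeat match goal with H: is_true (leq _ _) |- _ => move/ssrnat.leP: H => H end;
  try (apply/ssrnat.leP); unfold addn, subn, muln, expn, addn_rec, subn_rec, muln_rec, expn_rec in *; nia.

Section S.
Variable R : comNzRingType.
Variable n : nat.
Notation m := n.+1.

Lemma meval_madd (p p' : mpoly R m) xi : meval (madd p p') xi = meval p xi + meval p' xi.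
Proof. by rewrite /meval /madd big_cat. Qed.

Lemma mderiv_madd j (p p' : mpoly R m) : mderiv j (madd p p') = madd (mderiv j p) (mderiv j p').
Proof. by rewrite /mderiv /madd map_cat. Qed.

Lemma meval_deriv_scale j c (p : mpoly R m) xi :
  meval (mderiv j (mscale c p)) xi = c * meval (mderiv j p) xi.
Proof.
rewrite /meval /mderiv /mscale -map_comp !big_map big_distrr; apply: eq_bigr => t _ /=.
by rewrite !mulrA [_ * c]mulrC.
Qed.

Definition e0 : 'rV[R]_m := \row_(l < m) (l == ord0)%:R.

Lemma prod_e0_1 (e : 'I_m -> nat) :
  (forall l, l != ord0 -> e l = 0%N) -> \prod_(l < m) e0 0 l ^+ e l = 1.
Proof.
move=> H; apply: big1 => l _; rewrite mxE.
by case: (eqVneq l ord0) => [_|/H ->]; rewrite ?expr1n ?expr0.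
Qed.

Lemma prod_e0_0 (e : 'I_m -> nat) l :
  l != ord0 -> e l != 0%N -> \prod_(l < m) e0 0 l ^+ e l = 0.
Proof.
move=> hl he; rewrite (bigD1 l) //= mxE (negPf hl) expr0n (negPf he) mul0r //.
Qed.

Lemma sum_ind (i : 'I_m) (c : nat) : (\sum_(l < m) (l == i) * c)%N = c.
Proof.
rewrite (bigD1 i) //= eqxx mul1n big1 ?addn0 // => l /negPf ->; by rewrite mul0n.
Qed.

Lemma sum_unique (T : finType) (P : pred T) (F : T -> R) k0 :
  P k0 -> (forall k, P k -> k != k0 -> F k = 0) -> \sum_(k | P k) F k = F k0.
Proof.
move=> Pk0 H; rewrite (bigD1 k0) //= big1 ?addr0 // => k /andP [Pk nk]; exact: H.
Qed.

Lemma D2_sum r i j xi : meval (mderiv j (mderiv i (Apoly R m r))) xi =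
  \sum_(k : {ffun 'I_m -> 'I_r.+1} | (\sum_(l < m) val (k l) == r)%N)
    ((val (k j) - (j == i))%N%:R * ((val (k i))%:R * ((multinom r [ffun l => val (k l)]) ^ 2)%N%:R) *
     \prod_(l < m) xi 0 l ^+ ((val (k l) - (l == i)) - (l == j))).
Proof.
rewrite /meval /mderiv /Apoly !big_map big_filter big_enum_cond /=.
apply: eq_bigr => k _; rewrite !ffunE; congr (_ * _); by apply: eq_bigr => l _; rewrite !ffunE.
Qed.

Definition ks2 r (i j : 'I_m) : {ffun 'I_m -> nat} :=
  [ffun l => ((l == i) * 1 + (l == j) * 1 + (l == ord0) * (r - 2))%N].

Lemma D2_val r i j : (2 <= r)%N ->
  meval (mderiv j (mderiv i (Apoly R m r))) e0 =
  ((ks2 r i j j - (j == i)) * ks2 r i j i * (multinom r (ks2 r i j)) ^ 2)%N%:R.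
Proof.
move=> hr; rewrite D2_sum.
set k0 : {ffun 'I_m -> 'I_r.+1} := [ffun l => inord (ks2 r i j l)].
have hk0 : forall l, val (k0 l) = ks2 r i j l.
  move=> l; rewrite ffunE /= inordK // ffunE ltnS.
  case: (l == i); case: (l == j); case: (l == ord0) => /=; nlia.
have hkk0 : [ffun l => val (k0 l)] = ks2 r i j by apply/ffunP => l; rewrite ffunE hk0.
have hsum : (\sum_(l < m) ks2 r i j l = r)%N.
  under eq_bigr do rewrite ffunE.
  by rewrite !big_split /= !sum_ind; nlia.
rewrite (@sum_unique _ _ _ k0).
- rewrite !hk0 hkk0 prod_e0_1 ?mulr1 ?natrM ?mulrA //.
  move=> l hl; rewrite hk0 ffunE (negPf hl).
  by case: (l == i); case: (l == j) => /=; nlia.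
- by apply/eqP; rewrite -[in RHS]hsum; apply: eq_bigr => l _; rewrite hk0.
move=> k /eqP Pk nk.
have [Hi|Hi] := posnP (val (k i)); first by rewrite Hi !(mul0r, mulr0).
have [Hj|Hj] := posnP (val (k j) - (j == i))%N; first by rewrite Hj !(mul0r, mulr0).
case: (boolP [exists l, (l != ord0) && ((val (k l) - (l == i) - (l == j))%N != 0%N)]).
  by move/existsP => [l /andP [hl he]]; rewrite (prod_e0_0 hl he) mulr0.
rewrite negb_exists => /forallP H.
have key : forall l, l != ord0 -> val (k l) = ks2 r i j l.
  move=> l hl; move: (H l); rewrite hl /= negbK => /eqP; rewrite ffunE (negPf hl).
  case: (eqVneq l i) => [eli|nli]; case: (eqVneq l j) => [elj|nlj] /= he.
  - rewrite -elj -eli eqxx in Hj; rewrite -eli in Hi; rewrite /= in Hi Hj he; nlia.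
  - rewrite -eli in Hi; rewrite /= in Hi Hj he; nlia.
  - rewrite -elj (negPf nli) in Hj; rewrite /= in Hi Hj he; nlia.
  - rewrite /= in Hi Hj he; nlia.
have e0k : val (k ord0) = ks2 r i j ord0.
  move: Pk hsum; rewrite !big_ord_recl.
  rewrite (eq_bigr (fun l => ks2 r i j (lift ord0 l))) => [|l _]; last by apply: key; by rewrite eq_sym neq_lift.
  move=> /= h1 h2; nlia.
case/eqP: nk; apply/ffunP => l; apply/val_inj; rewrite /= hk0.
by case: (eqVneq l ord0) => [->|hl]; [exact: e0k | exact: key].
Qed.

Lemma D1_sum r j xi : meval (mderiv j (Apoly R m r)) xi =
  \sum_(k : {ffun 'I_m -> 'I_r.+1} | (\sum_(l < m) val (k l) == r)%N)
    ((val (k j))%:R * ((multinom r [ffun l => val (k l)]) ^ 2)%N%:R *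
     \prod_(l < m) xi 0 l ^+ (val (k l) - (l == j))).
Proof.
rewrite /meval /mderiv /Apoly !big_map big_filter big_enum_cond /=.
apply: eq_bigr => k _; rewrite !ffunE; congr (_ * _); by apply: eq_bigr => l _; rewrite !ffunE.
Qed.

Definition ks1 r (j : 'I_m) : {ffun 'I_m -> nat} :=
  [ffun l => ((l == j) * 1 + (l == ord0) * (r - 1))%N].

Lemma D1_val r j : (1 <= r)%N ->
  meval (mderiv j (Apoly R m r)) e0 =
  (ks1 r j j * (multinom r (ks1 r j)) ^ 2)%N%:R.
Proof.
move=> hr; rewrite D1_sum.
set k0 : {ffun 'I_m -> 'I_r.+1} := [ffun l => inord (ks1 r j l)].
have hk0 : forall l, val (k0 l) = ks1 r j l.
  move=> l; rewrite ffunE /= inordK // ffunE ltnS.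
  by case: (l == j); case: (l == ord0) => /=; nlia.
have hkk0 : [ffun l => val (k0 l)] = ks1 r j by apply/ffunP => l; rewrite ffunE hk0.
have hsum : (\sum_(l < m) ks1 r j l = r)%N.
  under eq_bigr do rewrite ffunE.
  by rewrite !big_split /= !sum_ind; nlia.
rewrite (@sum_unique _ _ _ k0).
- rewrite !hk0 hkk0 prod_e0_1 ?mulr1 ?natrM ?mulrA //.
  move=> l hl; rewrite hk0 ffunE (negPf hl).
  by case: (l == j) => /=; nlia.
- by apply/eqP; rewrite -[in RHS]hsum; apply: eq_bigr => l _; rewrite hk0.
move=> k /eqP Pk nk.
have [Hj|Hj] := posnP (val (k j)); first by rewrite Hj !(mul0r, mulr0).
case: (boolP [exists l, (l != ord0) && ((val (k l) - (l == j))%N != 0%N)]).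
  by move/existsP => [l /andP [hl he]]; rewrite (prod_e0_0 hl he) mulr0.
rewrite negb_exists => /forallP H.
have key : forall l, l != ord0 -> val (k l) = ks1 r j l.
  move=> l hl; move: (H l); rewrite hl /= negbK => /eqP; rewrite ffunE (negPf hl).
  case: (eqVneq l j) => [elj|nlj] /= he.
  - rewrite -elj in Hj; rewrite /= in Hj he; nlia.
  - rewrite /= in Hj he; nlia.
have e0k : val (k ord0) = ks1 r j ord0.
  move: Pk hsum; rewrite !big_ord_recl.
  rewrite (eq_bigr (fun l => ks1 r j (lift ord0 l))) => [|l _]; last by apply: key; by rewrite eq_sym neq_lift.
  move=> /= h1 h2; nlia.
case/eqP: nk; apply/ffunP => l; apply/val_inj; rewrite /= hk0.
by case: (eqVneq l ord0) => [->|hl]; [exact: e0k | exact: key].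
Qed.

Lemma pf1 (f : {ffun 'I_m -> nat}) a :
  (forall l, l != a -> (f l <= 1)%N) -> (\prod_(l < m) (f l)`!)%N = (f a)`!.
Proof.
move=> H; rewrite (bigD1 a) //= big1 ?muln1 // => l /H; by case: (f l) => [|[|]].
Qed.

Lemma pf2 (f : {ffun 'I_m -> nat}) a b : a != b ->
  (forall l, l != a -> l != b -> (f l <= 1)%N) -> (\prod_(l < m) (f l)`!)%N = ((f a)`! * (f b)`!)%N.
Proof.
move=> hab H; rewrite (bigD1 a) //= (bigD1 b) /=; last by rewrite eq_sym hab.
rewrite big1 ?muln1 // => l /andP [h1 h2]; move: (H l h1 h2); by case: (f l) => [|[|]].
Qed.

Definition D2n p (i j : 'I_m) :=
  ((ks2 p.+2 i j j - (j == i)) * ks2 p.+2 i j i * (multinom p.+2 (ks2 p.+2 i j)) ^ 2)%N.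
Definition D1n p (j : 'I_m) := (ks1 p.+1 j j * (multinom p.+1 (ks1 p.+1 j)) ^ 2)%N.

Lemma D1n0 p : D1n p ord0 = p.+1.
Proof.
rewrite /D1n /multinom (@pf1 _ ord0) => [|l hl]; last by rewrite ffunE (negPf hl).
by rewrite !ffunE eqxx /= !mul1n !subSS !subn0 add1n divnn fact_gt0 /= exp1n muln1.
Qed.

Lemma D1nj p j : j != ord0 -> D1n p j = (p.+1 ^ 2)%N.
Proof.
move=> hj; have hj' : ord0 != j by rewrite eq_sym.
rewrite /D1n /multinom (@pf2 _ ord0 j hj') => [|l h1 h2]; last by rewrite ffunE (negPf h1) (negPf h2).
rewrite !ffunE eqxx (negPf hj) eq_sym (negPf hj) /= subn1 /= add0n addn0 !mul1n.
by rewrite (_ : 1`! = 1)%N // muln1 factS div.mulnK ?fact_gt0.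
Qed.

Lemma D2n00 p : D2n p ord0 ord0 = (p.+1 * p.+2)%N.
Proof.
rewrite /D2n /multinom (@pf1 _ ord0) => [|l hl]; last by rewrite ffunE (negPf hl).
rewrite !ffunE eqxx /= !mul1n !subSS !subn0 !add1n divnn fact_gt0 /= exp1n muln1; nlia.
Qed.

Lemma D2ni0 p i : i != ord0 -> D2n p i ord0 = (p.+1 * p.+2 ^ 2)%N.
Proof.
move=> hi; have hi' : ord0 != i by rewrite eq_sym.
rewrite /D2n /multinom (@pf2 _ ord0 i hi') => [|l h1 h2]; last by rewrite ffunE (negPf h1) (negPf h2).
rewrite !ffunE eqxx (negPf hi) eq_sym (negPf hi) /= subn2 /= !mul1n !mul0n !add0n !addn0 muln1.
by rewrite eqxx subn0 add1n (_ : 1`! = 1)%N // muln1 (factS p.+1) div.mulnK ?fact_gt0 // /= muln1.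
Qed.

Lemma D2nij p i j : i != ord0 -> j != ord0 -> i != j -> D2n p i j = ((p.+1 * p.+2) ^ 2)%N.
Proof.
move=> hi hj hij; have hji : j != i by rewrite eq_sym.
have hi' : ord0 != i by rewrite eq_sym. have hj' : ord0 != j by rewrite eq_sym.
rewrite /D2n /multinom (@pf1 _ ord0) => [|l hl].
  rewrite !ffunE !eqxx ?(negPf hi) ?(negPf hj) ?(negPf hij) ?(negPf hji) ?(negPf hi') ?(negPf hj') /=.
  rewrite !mul0n !mul1n ?add0n ?addn0 ?subn0 !subSS ?subn0 (factS p.+1) factS mulnA div.mulnK ?fact_gt0 //.
  by rewrite mulnC.
rewrite ffunE (negPf hl); case: (eqVneq l i) => [->|nli]; [by rewrite (negPf hij) | by case: (l == j)].
Qed.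

Lemma D2nii p i : i != ord0 -> D2n p i i != (p.+2 ^ 2 * p.+1 ^ 2)%N.
Proof.
move=> hi; have hi' : ord0 != i by rewrite eq_sym.
rewrite /D2n /multinom (@pf2 _ ord0 i hi') => [|l h1 h2]; last by rewrite ffunE (negPf h1) (negPf h2).
rewrite !ffunE !eqxx ?(negPf hi) ?(negPf hi') /=.
rewrite !mul0n !mul1n ?add0n ?addn0 ?subn0 !subSS ?subn0.
set M := (_ %/ _)%N.
have h0 : (M * (p`! * 2) <= p.+2 * (p.+1 * p`!))%N.
  have -> : (p.+2 * (p.+1 * p`!) = (p.+2)`!)%N by [].
  have -> : (2 = (1+1)`!)%N by [].
  exact: leq_divM.
have h1 : (M * 2 <= p.+2 * p.+1)%N.
  by rewrite -(@leq_pmul2r p`!) ?fact_gt0 // -!mulnA [(2 * _)%N]mulnC.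
set N := (p.+2 * p.+1)%N in h1.
have EN : (p.+2 ^ 2 * p.+1 ^ 2 = N * N)%N by rewrite /N -!mulnn; nnia.
have h2 : ((M * 2) * (M * 2) <= N * N)%N by apply: leq_mul.
have hN : (0 < N * N)%N by rewrite /N.
rewrite EN -mulnn.
move: h2 hN; rewrite (mulnACA M 2%N M 2%N).
move: (M * M)%N (N * N)%N => a b h hb; apply/eqP; nlia.
Qed.

Lemma jac_entry p i j : jacF p.+1 e0 i j = (D2n p i j)%:R - (p.+2 ^ 2 * D1n p j)%N%:R.
Proof.
by rewrite mxE /Fmap mderiv_madd meval_madd meval_deriv_scale D2_val // D1_val // /D2n /D1n !natrM mulNr.
Qed.
End S.

Unset Implicit Arguments.
Theorem mainTheorem8 (R : realFieldType) (m q : nat) (hm : (1 <= m)%N) (hq : (1 <= q)%N) :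
  exists xi : 'rV[R]_m, \det (jacF q xi) != 0.
Proof.
case: m hm => // n _; case: q hq => // p _.
exists (e0 R n).
rewrite -det_tr det_trig.
  apply/prodf_neq0 => i _; rewrite mxE jac_entry subr_eq0 eqr_nat.
  case: (eqVneq i ord0) => [->|hi].
    by rewrite D2n00 D1n0 -mulnn neq_ltn; apply/orP; left; nnia.
  by rewrite D1nj // D2nii.
apply/is_trig_mxP => a b hab; rewrite mxE jac_entry; apply/eqP; rewrite subr_eq0 eqr_nat.
have hb : b != ord0 by rewrite -(inj_eq val_inj) /= -lt0n (leq_ltn_trans _ hab).
case: (eqVneq a ord0) => [->|ha].
  by rewrite D2ni0 // D1n0 mulnC.
have hba : b != a by rewrite -(inj_eq val_inj) /= gtn_eqF.
by rewrite D2nij // D1nj // expnMn mulnC.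
Qed.
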